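(* Let $(\mathcal Q,d)$ be a Hadamard space, $Y$ a $\mathcal Q$-valued random variable, $o\in\mathcal Q$, and $\tau\in\mathcal S_0^+$ with $\tau'(0)=0$ and $\mathbb E[\tau'(d(Y,o))]<\infty$. Let $m\in\arg\min_{q\in\mathcal Q}\mathbb E[\tau(d(Y,q))-\tau(d(Y,o))]$. Then for all $q\in\mathcal Q$, $$\mathbb E[\tau(d(Y,q))-\tau(d(Y,m))]\ \ge\ \tau(d(q,m))\,\mathbb P(Y=m).$$
   Context: A Hadamard space is a complete metric space $(\mathcal Q,d)$ such that for all $y_0,y_1$ there is $m$ with $\frac12 d(y_0,q)^2+\frac12 d(y_1,q)^2-\frac14 d(y_0,y_1)^2\ge d(q,m)^2$ for all $q$. $\mathcal S_0^+$ is the set of nondecreasing convex $\tau:[0,\infty)\to\mathbb R$, differentiable on $(0,\infty)$ with concave derivative $\tau'$, where $\tau'(0):=\lim_{x\searrow0}\tau'(x)$, such that $\tau(0)=0$ and $\tau'(x)>0$ for $x>0$. *)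

(* Defs.v *)
From HB Require Import structures.
From mathcomp Require Import all_boot all_order all_algebra.
From mathcomp Require Import all_classical all_reals all_analysis.
Set Implicit Arguments. Unset Strict Implicit. Unset Printing Implicit Defensive.
Import Order.TTheory GRing.Theory Num.Theory.
Import numFieldNormedType.Exports.
Local Open Scope classical_set_scope.
Local Open Scope ring_scope.

Definition is_metric (R : realType) (Q : Type) (d : Q -> Q -> R) : Prop :=
  (forall x y, 0 <= d x y) /\
  (forall x y, d x y = 0 <-> x = y) /\
  (forall x y, d x y = d y x) /\
  (forall x y z, d x z <= d x y + d y z).

Definition metric_cauchy (R : realType) (Q : Type) (d : Q -> Q -> R)
  (u : nat -> Q) : Prop :=
  forall e : R, 0 < e -> exists N : nat, forall m n, (N <= m)%N -> (N <= n)%N ->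
    d (u m) (u n) < e.

Definition metric_converges (R : realType) (Q : Type) (d : Q -> Q -> R)
  (u : nat -> Q) (l : Q) : Prop :=
  forall e : R, 0 < e -> exists N : nat, forall n, (N <= n)%N -> d (u n) l < e.

Definition metric_complete (R : realType) (Q : Type) (d : Q -> Q -> R) : Prop :=
  forall u, metric_cauchy d u -> exists l, metric_converges d u l.

Definition hadamard_space (R : realType) (Q : Type) (d : Q -> Q -> R) : Prop :=
  is_metric d /\ metric_complete d /\
  forall y0 y1 : Q, exists m : Q, forall q : Q,
    (d q m) ^+ 2 <= 2^-1 * (d y0 q) ^+ 2 + 2^-1 * (d y1 q) ^+ 2
                    - 4^-1 * (d y0 y1) ^+ 2.

(** Open sets of the metric topology, and Borel measurability of a
    Q-valued map on a measurable space (preimages of open sets measurable;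
    this is equivalent to measurability w.r.t. the Borel sigma-algebra). *)
Definition metric_open (R : realType) (Q : Type) (d : Q -> Q -> R)
  (U : set Q) : Prop :=
  forall x, U x -> exists e : R, 0 < e /\ forall y, d x y < e -> U y.

Definition borel_measurable_map (R : realType) (Q : Type) (d : Q -> Q -> R)
  (dT : measure_display) (T : measurableType dT) (Y : T -> Q) : Prop :=
  forall U : set Q, metric_open d U -> measurable (Y @^-1` U).

Definition S0plus (R : realType) (tau : R -> R) : Prop :=
  (forall x y : R, 0 <= x -> x <= y -> tau x <= tau y) /\
  (forall x y t : R, 0 <= x -> 0 <= y -> 0 <= t -> t <= 1 ->
     tau ((1 - t) * x + t * y) <= (1 - t) * tau x + t * tau y) /\
  (forall x : R, 0 < x -> derivable tau x 1) /\
  (forall x y t : R, 0 < x -> 0 < y -> 0 <= t -> t <= 1 ->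
     (1 - t) * derive1 tau x + t * derive1 tau y <= derive1 tau ((1 - t) * x + t * y)) /\
  tau 0 = 0 /\
  (forall x : R, 0 < x -> 0 < derive1 tau x).

Definition tau_prime (R : realType) (tau : R -> R) (x : R) : R :=
  if x == 0 then lim (derive1 tau z @[z --> 0^'+]) else derive1 tau x.

(* Main.v *)
Set Warnings "-all".
Require Import Defs.
From HB Require Import structures.
From mathcomp Require Import all_boot all_order all_algebra.
From mathcomp Require Import all_classical all_reals all_analysis.
From mathcomp Require Import ring lra measurable_realfun.
Import Order.TTheory GRing.Theory Num.Theory.
Import numFieldNormedType.Exports.
Local Open Scope classical_set_scope.
Local Open Scope ring_scope.
Set Implicit Arguments. Unset Strict Implicit.
Lemma tau_tangent (R : realType) (tau : R -> R) (a b : R) :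
  S0plus tau -> 0 < a -> 0 <= b -> tau a + (b - a) * derive1 tau a <= tau b.
Proof.
rewrite mulrC.
move=> [nd [cv [der [cc [t0 pos]]]]] a0 b0.
have H := der a a0; rewrite /derivable in H.
have E : derive1 tau a = lim ((fun h => h^-1 *: ((tau \o shift a) (h *: 1) - tau a)) @ 0^').
  by rewrite derive1E.
rewrite -E in H.
have [->|ba] := eqVneq b a; first by rewrite subrr mulr0 addr0.
set D := derive1 tau a in H *.
set k := `|b - a|.
have k0 : 0 < k by rewrite normr_gt0 subr_eq0.
rewrite -lerBrDl; apply/ler_addgt0Pr => e e0.
have ek : 0 < e / k by rewrite divr_gt0.
have Hn : \forall t \near 0^', `|D - t^-1 *: (tau (t%:A + a) - tau a)| < e / k.
  by apply: (cvgrPdist_lt _ _).1 H _ ek.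
rewrite near_withinE in Hn; case/nbhs_ballP: Hn => del /= del0 Hd.

set s := del / (del + 2 * k).
have s0 : 0 < s by rewrite divr_gt0 // addr_gt0 // mulr_gt0.
have s1 : s <= 1 by rewrite ler_pdivrMr ?addr_gt0 ?mulr_gt0 // mul1r lerDl mulr_ge0 // ltW.
set h := s * (b - a).
have hn : `|h| = s * k by rewrite /h normrM gtr0_norm.
have hdel : `|h| < del.
  rewrite hn /s mulrAC ltr_pdivrMr ?addr_gt0 ?mulr_gt0 //.
  nra.
have h0 : h != 0 by rewrite /h mulf_eq0 negb_or gt_eqF //= subr_eq0.
have := Hd h; rewrite /ball /= sub0r normrN => /(_ hdel h0).
have -> : h%:A + a = (1 - s) * a + s * b by rewrite /h /GRing.scale /= mulr1; ring.
have Hc := cv a b s (ltW a0) b0 (ltW s0) s1.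
set u := tau ((1 - s) * a + s * b) in Hc *.
rewrite /GRing.scale /=.
move=> Hq.
have Hq2 : `|D * (b - a) - h^-1 * (u - tau a) * (b - a)| < e.
  rewrite -mulrBl normrM -/k -(divfK (lt0r_neq0 k0) e) ltr_pM2r //.
have Hq3 : h^-1 * (u - tau a) * (b - a) <= tau b - tau a.
  have -> : h^-1 * (u - tau a) * (b - a) = (u - tau a) / s.
    rewrite /h; field; apply/andP; split; [exact: lt0r_neq0|by rewrite subr_eq0].
  rewrite ler_pdivrMr //; nra.
have := ler_norm (D * (b - a) - h^-1 * (u - tau a) * (b - a)).
lra.
Qed.

Lemma tau_ge0 (R : realType) (tau : R -> R) x : S0plus tau -> 0 <= x -> 0 <= tau x.
Proof. by move=> [nd [_ [_ [_ [t0 _]]]]] x0; rewrite -t0 nd. Qed.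

Lemma taup_mono (R : realType) (tau : R -> R) x y : S0plus tau -> 0 < x -> x <= y ->
  derive1 tau x <= derive1 tau y.
Proof.
move=> S x0 xy; have y0 : 0 < y by exact: lt_le_trans xy.
have h1 := tau_tangent S x0 (ltW y0).
have h2 := tau_tangent S y0 (ltW x0).
have [->|xy'] := eqVneq x y; first by [].
have : x < y by rewrite lt_neqAle xy' xy.
nra.
Qed.

Lemma tau_le_deriv (R : realType) (tau : R -> R) s : S0plus tau -> 0 < s ->
  tau s <= s * derive1 tau s.
Proof.
move=> S s0; have := tau_tangent S s0 (lexx 0).
case: S => [_ [_ [_ [_ [t0 _]]]]]; rewrite t0; nra.
Qed.

Lemma deriv_small (R : realType) (tau : R -> R) :
  derive1 tau z @[z --> 0^'+] --> 0 -> forall e : R, 0 < e ->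
  exists2 del : R, 0 < del & forall s, 0 < s -> s < del -> derive1 tau s < e.
Proof.
move=> H e e0.
have Hn : \forall t \near 0^'+, `|0 - derive1 tau t| < e.
  by apply: (cvgrPdist_lt _ _).1 H _ e0.
rewrite near_withinE in Hn; case/nbhs_ballP: Hn => del /= del0 Hd.
exists del => // s s0 sd.
have := Hd s; rewrite /ball /= sub0r normrN gtr0_norm // => /(_ sd s0).
rewrite sub0r normrN => h; exact: le_lt_trans (ler_norm _) h.
Qed.

Lemma tau_prime0 (R : realType) (tau : R -> R) :
  derive1 tau z @[z --> 0^'+] --> 0 -> tau_prime tau 0 = 0.
Proof. by move=> H; rewrite /tau_prime eqxx; apply: cvg_lim. Qed.

Lemma tau_primeE (R : realType) (tau : R -> R) x : 0 < x -> tau_prime tau x = derive1 tau x.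
Proof. by move=> x0; rewrite /tau_prime gt_eqF. Qed.

Lemma tau_prime_ge0 (R : realType) (tau : R -> R) x : S0plus tau ->
  derive1 tau z @[z --> 0^'+] --> 0 -> 0 <= x -> 0 <= tau_prime tau x.
Proof.
move=> [_ [_ [_ [_ [_ pos]]]]] H; rewrite le_eqVlt => /orP[/eqP<-|x0].
  by rewrite tau_prime0.
by rewrite tau_primeE // ltW // pos.
Qed.

Lemma tau_prime_nd (R : realType) (tau : R -> R) x y : S0plus tau ->
  derive1 tau z @[z --> 0^'+] --> 0 -> 0 <= x -> x <= y -> tau_prime tau x <= tau_prime tau y.
Proof.
move=> S H x0 xy; have y0 := le_trans x0 xy.
move: x0; rewrite le_eqVlt => /orP[/eqP<-|x0].
  by rewrite tau_prime0 // tau_prime_ge0.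
by rewrite !tau_primeE ?(lt_le_trans x0) // taup_mono.
Qed.

Lemma tau_bound (R : realType) (tau : R -> R) a b c : S0plus tau ->
  derive1 tau z @[z --> 0^'+] --> 0 -> 0 <= a -> 0 <= b -> `|a - b| <= c ->
  `|tau a - tau b| <= c * (derive1 tau (1 + c) + (1 + 2 * c) * tau_prime tau b).
Proof.
move=> S H a0 b0 abc.
have c0 : 0 <= c := le_trans (normr_ge0 _) abc.
have S' := S; case: S' => [nd [_ [_ [cc [t0 pos]]]]].
have K0 : 0 < derive1 tau (1 + c) by apply: pos; lra.
have tb0 := tau_prime_ge0 S H b0.
have [ab|ba] := leP a b.
  rewrite ler0_norm ?subr_le0 ?nd //.
  move: b0; rewrite le_eqVlt => /orP[/eqP b0|b0].
    subst b; have -> : a = 0 by apply/le_anti; rewrite ab a0.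
    rewrite subrr oppr0; apply: mulr_ge0 => //; apply: addr_ge0; [exact: ltW|].
    apply: mulr_ge0 => //; lra.
  have := tau_tangent S b0 a0; rewrite tau_primeE //.
  move: abc; rewrite ler0_norm ?subr_le0 // => abc.
  have : 0 <= derive1 tau b by exact/ltW/pos.
  nra.
have bpos : 0 < a by exact: le_lt_trans ba.
rewrite ger0_norm; last by rewrite subr_ge0 nd // ltW.
move: abc; rewrite gtr0_norm ?subr_gt0 // => abc.
have h1 := tau_tangent S bpos b0.
have h2 : derive1 tau a <= derive1 tau (b + c) by apply: taup_mono => //; lra.
suff h3 : derive1 tau (b + c) <= derive1 tau (1 + c) + (1 + 2 * c) * tau_prime tau b.
  have da : 0 <= derive1 tau a by exact/ltW/pos.
  have s1 : (a - b) * derive1 tau a <= c * derive1 tau a by rewrite ler_wpM2r.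
  have s2 : c * derive1 tau a <= c * (derive1 tau (1 + c) + (1 + 2 * c) * tau_prime tau b).
    rewrite ler_wpM2l //; lra.
  rewrite mulrBl in h1; rewrite mulrBl in s1.
  lra.
have [b1|b1] := ltP b 1.
  have : derive1 tau (b + c) <= derive1 tau (1 + c) by apply: taup_mono => //; lra.
  have : 0 <= (1 + 2 * c) * tau_prime tau b by apply: mulr_ge0 => //; lra.
  lra.
rewrite tau_primeE; last lra.
pose t := (b - 2^-1) / (b + c - 2^-1).
have t0' : 0 < t by apply: divr_gt0; lra.
have t1 : t <= 1 by rewrite ler_pdivrMr; lra.
have hc := cc (2^-1) (b + c) t ltac:(lra) ltac:(lra) (ltW t0') t1.
have et : (1 - t) * 2^-1 + t * (b + c) = b.
  rewrite /t; field; lra.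
rewrite et in hc.
have p1 : 0 < derive1 tau (2^-1) by apply: pos; lra.
have p2 : 0 < derive1 tau (b + c) by apply: pos; lra.
have hb : t * derive1 tau (b + c) <= derive1 tau b.
  have : 0 <= 1 - t by lra.
  nra.
have : derive1 tau (b + c) <= (1 + 2 * c) * derive1 tau b.
  have e1 : derive1 tau (b + c) = (t * derive1 tau (b + c)) / t.
    by field; lra.
  rewrite e1 ler_pdivrMr //.
  have : 1 <= (1 + 2 * c) * t.
    rewrite /t mulrA ler_pdivlMr; last lra.
    nra.
  have : 0 <= derive1 tau b by apply/ltW/pos; lra.
  nra.
lra.
Qed.

Lemma mid_exists (R : realType) (Q : Type) (d : Q -> Q -> R) :
  hadamard_space d -> forall y0 y1, exists z,
    d y0 z <= d y0 y1 / 2 /\ forall y, d y z <= (d y y0 + d y y1) / 2.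
Proof.
move=> [[d0 [dE [ds dt]]] [_ H]] y0 y1.
have [z Hz] := H y0 y1; exists z; split.
  have := Hz y0; have := d0 y0 z; have := d0 y0 y1.
  rewrite (proj2 (dE y0 y0) erefl) (ds y1 y0) => h1 h2 h3.
  nra.
move=> y; have := Hz y.
have t1 := dt y0 y1 y; have t2 := dt y1 y0 y.
rewrite (ds y0 y) (ds y1 y) (ds y1 y0) in t1 t2 *.
have := d0 y z; have := d0 y y0; have := d0 y y1; have := d0 y0 y1.
move=> h1 h2 h3 h4 h5.
nra.
Qed.

Lemma iter_mid (R : realType) (Q : Type) (d : Q -> Q -> R) (tau : R -> R) (m q : Q) :
  hadamard_space d -> S0plus tau -> forall n : nat, exists x, exists t : R,
    [/\ 0 < t, t * n.+1%:R <= 1, d m x <= t * d m q &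
      forall y, tau (d y x) <= (1 - t) * tau (d y m) + t * tau (d y q)].
Proof.
move=> Hh S; have Hh' := Hh; case: Hh' => [[d0 [dE [ds dt]]] _].
have S' := S; case: S' => [nd [cv _]].
elim=> [|n [x [t [t0 tn dx Hy]]]].
  exists q, 1; split => //; first by rewrite mul1r.
  by move=> y; rewrite subrr mul0r add0r mul1r.
have [z [hz1 hz2]] := mid_exists Hh m x.
have n1 : 1 <= n.+1%:R :> R by rewrite ler1n.
have t1 : t <= 1 by nra.
exists z, (t / 2); split.
- by rewrite divr_gt0.
- have e : (n.+2)%:R = 1 + (n.+1)%:R :> R by rewrite [LHS]mulrS.
  rewrite e mulrDr mulr1 mulrAC; lra.
- have := d0 m q; nra.
move=> y.
have e1 := cv (d y m) (d y x) (2^-1) (d0 _ _) (d0 _ _) ltac:(lra) ltac:(lra).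
have e2 : tau (d y z) <= tau ((1 - 2^-1) * d y m + 2^-1 * d y x).
  apply: nd; first exact: d0.
  have := hz2 y; lra.
have := Hy y.
lra.
Qed.

Lemma dist_meas (R : realType) (Q : Type) (d : Q -> Q -> R)
  (dT : measure_display) (T : measurableType dT) (Y : T -> Q) (x : Q) :
  is_metric d -> borel_measurable_map d Y ->
  measurable_fun setT (fun w => d (Y w) x).
Proof.
move=> [d0 [dE [ds dt]]] HY.
apply: (measurability (@RGenOInfty.G R)) => [|/= _ [_] [r] -> <-].
  exact: RGenOInfty.measurableE.
apply: measurableI => //.
have -> : (fun w => d (Y w) x) @^-1` `]r, +oo[%classic = Y @^-1` [set z | r < d z x].
  by apply/seteqP; split => w /=; rewrite in_itv /= andbT.
apply: HY => z /= rz; exists (d z x - r); split; first by rewrite subr_gt0.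
move=> y hy; have := dt z y x; rewrite /=; lra.
Qed.

Lemma mono_comp_meas (R : realType) (Q : Type) (d : Q -> Q -> R)
  (dT : measure_display) (T : measurableType dT) (Y : T -> Q) (x : Q) (f : R -> R) :
  is_metric d -> borel_measurable_map d Y ->
  (forall a b, 0 <= a -> a <= b -> f a <= f b) ->
  measurable_fun setT (fun w => f (d (Y w) x)).
Proof.
move=> Hm HY Hf.
have -> : (fun w => f (d (Y w) x)) = (fun r => f (Num.max r 0)) \o (fun w => d (Y w) x).
  apply/funext => w /=; congr f; apply/esym/max_l; exact: (proj1 Hm).
apply: measurableT_comp; last exact: dist_meas.
apply: nondecreasing_measurable => // a b ab; apply: Hf.
  by rewrite le_max lexx orbT.
by rewrite ge_max !le_max ab lexx /= orbT.
Qed.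

Lemma fx_int (R : realType) (Q : Type) (d : Q -> Q -> R)
  (dT : measure_display) (T : measurableType dT) (P : probability T R)
  (Y : T -> Q) (o : Q) (tau : R -> R) (x : Q) :
  hadamard_space d -> borel_measurable_map d Y -> S0plus tau ->
  derive1 tau z @[z --> 0^'+] --> 0 ->
  (\int[P]_w (tau_prime tau (d (Y w) o))%:E < +oo)%E ->
  P.-integrable setT (fun w => (tau (d (Y w) x) - tau (d (Y w) o))%:E).
Proof.
move=> [Hm _] HY S H0 Hint.
have [d0 [dE [ds dt]]] := Hm.
have S' := S; case: S' => [nd _].
set c := d x o; set K := derive1 tau (1 + c).
have c0 : 0 <= c := d0 x o.
have K0 : 0 < K.
  rewrite /K; case: S => [_ [_ [_ [_ [_ pos]]]]]; apply: pos; lra.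
have mtp : measurable_fun setT (fun w => tau_prime tau (d (Y w) o)).
  by apply: mono_comp_meas => // a b a0 ab; apply: tau_prime_nd.
have itp : P.-integrable setT (fun w => (tau_prime tau (d (Y w) o))%:E).
  apply/integrableP; split; first exact/measurable_EFinP.
  rewrite (eq_integral (fun w => (tau_prime tau (d (Y w) o))%:E)) //.
  by move=> w _; rewrite gee0_abs // lee_fin tau_prime_ge0.
have Hg : P.-integrable setT (fun w => (c * K + (c * (1 + 2 * c)) * tau_prime tau (d (Y w) o))%:E).
  pose f1 := fun w : T => ((c * K)%:E)%E.
  pose f2 := fun w : T => ((c * (1 + 2 * c))%:E * (tau_prime tau (d (Y w) o))%:E)%E.
  have i12 : P.-integrable setT (f1 \+ f2)%E.
    apply: integrableD => //; first exact: (finite_measure_integrable_cst P (c * K) measurableT).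
    exact: integrableZl.
  apply: (eq_integrable measurableT _ _ _ i12).
  by move=> w _; rewrite /f1 /f2 /= EFinD EFinM.
apply: (le_integrable measurableT _ _ Hg).
- apply/measurable_EFinP; apply: measurable_funB.
  + by apply: (@mono_comp_meas _ _ d _ _ Y _ tau Hm HY) => a b a0 ab; apply: nd.
  + by apply: (@mono_comp_meas _ _ d _ _ Y _ tau Hm HY) => a b a0 ab; apply: nd.
- move=> w _; rewrite !abse_EFin lee_fin.
  rewrite [X in _ <= X]ger0_norm; last first.
    apply: addr_ge0; first by apply: mulr_ge0 => //; apply: ltW.
    by apply: mulr_ge0; [apply: mulr_ge0 => //; lra|apply: tau_prime_ge0].
  have := @tau_bound _ tau (d (Y w) x) (d (Y w) o) c S H0 (d0 _ _) (d0 _ _).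
  rewrite -/K.
  have hab : `|d (Y w) x - d (Y w) o| <= c.
    rewrite ler_norml; have := dt (Y w) o x; have := dt (Y w) x o; rewrite (ds o x) -/c; lra.
  move=> /(_ hab); rewrite mulrDr mulrA //.
Qed.

Unset Implicit Arguments. Set Strict Implicit.

Theorem mainTheorem9 (R : realType) (Q : Type) (d : Q -> Q -> R)
  (dT : measure_display) (T : measurableType dT) (P : probability T R)
  (Y : T -> Q) (o : Q) (tau : R -> R) (m : Q) :
  hadamard_space d ->
  borel_measurable_map d Y ->
  S0plus tau ->
  derive1 tau z @[z --> 0^'+] --> 0 ->
  (\int[P]_w (tau_prime tau (d (Y w) o))%:E < +oo)%E ->
  (forall q : Q,
     (\int[P]_w (tau (d (Y w) m) - tau (d (Y w) o))%:E
      <= \int[P]_w (tau (d (Y w) q) - tau (d (Y w) o))%:E)%E) ->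
  forall q : Q,
    ((tau (d q m))%:E * P [set w | Y w = m]
     <= \int[P]_w (tau (d (Y w) q) - tau (d (Y w) m))%:E)%E.
Proof.
move=> Hh HY S H0 Hint Hmin q.
have Hh' := Hh; case: Hh' => [Hm _]; have [d0 [dE [ds dt]]] := Hm.
have S' := S; case: S' => [nd [cv [_ [_ [t0 pos]]]]].
pose f x w := tau (d (Y w) x) - tau (d (Y w) o).
have If : forall x, P.-integrable setT (fun w => (f x w)%:E).
  by move=> x; exact: (@fx_int R Q d dT T P Y o tau x Hh HY S H0 Hint).
pose g w := tau (d (Y w) q) - tau (d (Y w) m).
have Ig : P.-integrable setT (fun w => (g w)%:E).
  apply: (eq_integrable measurableT _ _ _ (integrableB measurableT (If q) (If m))).
  by move=> w _; rewrite /f /g /= -EFinD; congr EFin; ring.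
set A := [set w | Y w = m].
have mA : measurable A.
  have -> : A = ~` (Y @^-1` [set z | z <> m]).
    by apply/seteqP; split => w /=; [move=> -> /(_ erefl)|move/contrapT].
  apply: measurableC; apply: HY => z /= zm; exists (d z m); split.
    by rewrite lt_neqAle d0 andbT eq_sym; apply/negP => /eqP /dE.
  by move=> y hy ym; rewrite ym in hy; rewrite ltxx in hy.
set D := d q m.
have D0 : 0 <= D := d0 q m.
have Gfin := integrable_fin_num measurableT Ig.
set G := (\int[P]_w (g w)%:E)%E in Gfin *.
have PAfin : P A \is a fin_num by apply: fin_num_measure.
set gr := fine G; set p0 := fine (P A).
have EG : G = gr%:E by rewrite /gr fineK.
have EP : P A = p0%:E by rewrite /p0 fineK.
have p00 : 0 <= p0 by rewrite -lee_fin -EP measure_ge0.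
have p01 : p0 <= 1 by rewrite -lee_fin -EP probability_le1.
have key : forall x t, 0 < t -> d m x <= t * D ->
    (forall y, tau (d y x) <= (1 - t) * tau (d y m) + t * tau (d y q)) ->
    0 <= t * gr + (tau (t * D) - t * tau D) * p0.
  move=> x t tp dmx Hy.
  pose c := tau (t * D) - t * tau D.
  pose b w := t * g w + c * (@indic T R A w).
  have Ib : P.-integrable setT (fun w => (b w)%:E).
    have i1 := integrableZl measurableT t Ig.
    have i2 := integrableZl measurableT c (integrable_indic P mA).
    apply: (eq_integrable measurableT _ _ _ (integrableD measurableT i1 i2)).
    by move=> w _; rewrite /b /= EFinD.
  have Ibv : (\int[P]_w (b w)%:E = (t * gr + c * p0)%:E)%E.
    have i1 := integrableZl measurableT t Ig.
    have i2 := integrableZl measurableT c (integrable_indic P mA).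
    rewrite (eq_integral (fun w => (t%:E * (g w)%:E) + (c%:E * (\1_A w)%:E))%E); last first.
      by move=> w _; rewrite /b /= EFinD.
    have hi : (\int[P]_w (@indic T R A w)%:E = P A)%E.
      by rewrite integral_indic // setIT.
    rewrite integralD // integralZl // integralZl //.
    transitivity (t%:E * G + c%:E * P A)%E.
      by congr (_ + _)%E; congr (_ * _)%E; exact: hi.
      by rewrite EG EP.
    all: try exact: (integrable_indic P mA).
  have Ifmb := integrableD measurableT (If m) Ib.
  have le1 : (\int[P]_w (f x w)%:E <= \int[P]_w ((f m w)%:E + (b w)%:E))%E.
    apply: le_integral => // w _; rewrite -EFinD lee_fin /f /b /g.
    have [ym|ym] := pselect (Y w = m).
      have wA : w \in A by apply/mem_set.
      rewrite indicE wA mulr1 ym (proj2 (dE m m) erefl) t0 (ds m q) -/D.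
      have : tau (d m x) <= tau (t * D) by apply: nd.
      rewrite /c; lra.
    have wA : w \in A = false by apply/negbTE/negP => /set_mem.
    rewrite indicE wA mulr0 addr0.
    have := Hy (Y w); lra.
  rewrite integralD // Ibv in le1.
  have := Hmin x; rewrite -/(f m) -/(f x) => le2.
  have Fmfin := integrable_fin_num measurableT (If m).
  have := le_trans le2 le1.
  rewrite -(fineK Fmfin) -EFinD lee_fin /c; lra.
rewrite -/G EG EP -EFinM lee_fin mulrC.
apply/ler_addgt0Pr => e e0.
suff [x [t [tp dmx Hy small]]] : exists x t, [/\ 0 < t, d m x <= t * D,
    (forall y, tau (d y x) <= (1 - t) * tau (d y m) + t * tau (d y q)) &
    p0 * tau (t * D) <= t * e].
  have := key x t tp dmx Hy.
  nra.
have [D00|Dp] := eqVneq D 0.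
  have [x [t [tp _ dmx Hy]]] := iter_mid m q Hh S 0.
  exists x, t; split => //; first by rewrite /D (ds q m).
  have -> : tau (t * D) = 0 by rewrite D00 mulr0 t0.
  rewrite mulr0; apply: mulr_ge0; lra.
have Dp' : 0 < D by rewrite lt_neqAle eq_sym Dp D0.
have [del del0 Hdel] := @deriv_small R tau H0 (e / D) ltac:(by rewrite divr_gt0).
have bd0 : 0 <= D / del by rewrite divr_ge0 // ltW.
set n := Num.Def.archi_bound (D / del).
have hn := archi_boundP bd0; rewrite -/n in hn.
have [x [t [tp tn dmx Hy]]] := iter_mid m q Hh S n.
exists x, t; split => //; first by rewrite /D (ds q m).
have tD0 : 0 < t * D by rewrite mulr_gt0.
have tDdel : t * D < del.
  have hn' : D < n%:R * del by rewrite -ltr_pdivrMr.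
  have n1 : n.+1%:R = n%:R + 1 :> R by rewrite natr1.
  rewrite n1 in tn.
  have n0 : 0 <= n%:R :> R by [].
  have h1 : D * (t * (n%:R + 1)) <= D by rewrite -[leRHS]mulr1 ler_wpM2l.
  nra.
have := tau_le_deriv S tD0.
have := Hdel (t * D) tD0 tDdel.
have := tau_ge0 S (ltW tD0).
move=> h1 h2 h3.
have h4 : tau (t * D) <= t * e.
  apply: (le_trans h3).
  have -> : t * e = (t * D) * (e / D) by field; exact: lt0r_neq0.
  by apply: ler_wpM2l; [exact: ltW|exact: ltW].
have h5 : p0 * tau (t * D) <= tau (t * D) by rewrite -[leRHS]mul1r ler_wpM2r.
exact: (le_trans h5 h4).
Qed.
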